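(* Let $e\geqslant 1$ be an integer and $b\geqslant 2$ an even integer. Suppose that for every integer $a$ there exists an $(e,b)$-happy number $h$ with $h\equiv a\pmod{(b-1)^e}$. Then for every positive integer $x$ and every $N$, there exists an $(e,b)$-happy number $l>N$ such that $l+x$ is also $(e,b)$-happy.
   Context: For a positive integer $n=\sum_{j=0}^k a_j b^j$ with $0\leqslant a_j<b$, $T_{e,b}(n)=\sum_{j=0}^k a_j^e$; $T_{e,b}^r$ is the $r$-th iterate, $T_{e,b}^0(n)=n$. A positive integer $n$ is $(e,b)$-happy if $T_{e,b}^r(n)=1$ for some $r\geqslant 0$. *)

(* Defs.v *)
From mathcomp Require Import all_boot all_order all_algebra.
Set Implicit Arguments. Unset Strict Implicit. Unset Printing Implicit Defensive.

(* The fuel argument [k] only needs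
   to exceed the number of digits of n; we use fuel n.+1, which suffices for
   b >= 2 (for b < 2 the function is a junk value, never used). *)
Fixpoint digit_pow_sum_fuel (k e b n : nat) : nat :=
  match k with
  | 0 => 0
  | k'.+1 => if n == 0 then 0
             else (n %% b) ^ e + digit_pow_sum_fuel k' e b (n %/ b)
  end.

Definition T (e b n : nat) : nat := digit_pow_sum_fuel n.+1 e b n.

Definition happy (e b n : nat) : Prop :=
  0 < n /\ exists r : nat, iter r (T e b) n = 1.

(* Main.v *)
Require Import Defs.
From mathcomp Require Import all_boot all_order all_algebra.
From mathcomp Require Import cyclic.
From mathcomp Require Import zify.
Import GRing.Theory Num.Theory.

Section Aux.
Variables e b : nat.
Hypothesis he : 1 <= e.
Hypothesis hb : 2 <= b.

Lemma fuel_stable k n : n < k ->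
  digit_pow_sum_fuel k e b n = digit_pow_sum_fuel k.+1 e b n.
Proof.
elim: k n => [//|k IH] n hn /=.
case: eqP => // /eqP n0.
have hd : n %/ b < k.
  have : n %/ b < n by rewrite ltn_Pdiv // lt0n.
  move=> H; apply: leq_trans H _; by [].
by rewrite IH.
Qed.

Lemma fuel_T k n : n < k -> digit_pow_sum_fuel k e b n = T e b n.
Proof.
rewrite /T; elim: k => [//|k IH] hn.
case: (ltngtP n k) => [lt|gt|eq].
- by rewrite -fuel_stable // IH.
- by move: hn; rewrite ltnS leqNgt gt.
- by rewrite eq.
Qed.

Lemma T_eq n : T e b n = if n == 0 then 0 else (n %% b) ^ e + T e b (n %/ b).
Proof.
rewrite {1}/T /=; case: eqP => // /eqP n0.
by rewrite fuel_T // ltn_Pdiv // lt0n.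
Qed.

Lemma T0 : T e b 0 = 0.
Proof. by rewrite T_eq. Qed.

Lemma T_step n d : d < b -> T e b (n * b + d) = d ^ e + T e b n.
Proof.
move=> hd; rewrite T_eq.
case: eqP => [/eqP|_].
  rewrite addn_eq0 muln_eq0 => /andP [/orP [/eqP -> | /eqP b0] /eqP ->].
    by rewrite T0 exp0n.
  by move: hb; rewrite b0.
have bp : 0 < b by apply: leq_trans hb.
by rewrite modnMDl modn_small // divnMDl // divn_small // addn0.
Qed.

Lemma T_block A B K : B < b ^ K -> T e b (A * b ^ K + B) = T e b A + T e b B.
Proof.
have bp : 0 < b by apply: leq_trans hb.
elim: K A B => [|K IH] A B hB.
  by move: hB; rewrite expn0 ltnS leqn0 => /eqP ->; rewrite T0 !addn0 muln1.
have -> : A * b ^ K.+1 + B = (A * b ^ K + B %/ b) * b + B %% b.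
  by rewrite mulnDl -mulnA -expnSr -addnA -divn_eq.
rewrite T_step ?ltn_pmod // IH.
  by rewrite [B in RHS](divn_eq B b) T_step ?ltn_pmod // addnCA.
by rewrite ltn_divLR // -expnSr.
Qed.

Lemma T_nines s : T e b (b ^ s - 1) = s * (b - 1) ^ e.
Proof.
have bp : 0 < b by apply: leq_trans hb.
elim: s => [|s IH]; first by rewrite expn0 subnn T0.
have -> : b ^ s.+1 - 1 = (b ^ s - 1) * b + (b - 1).
  have : 0 < b ^ s by rewrite expn_gt0 bp.
  rewrite expnS; move: (b ^ s) => X hX; nia.
rewrite T_step; last by rewrite subn1 prednK.
by rewrite IH mulSn.
Qed.

Lemma T_pow K : T e b (b ^ K) = 1.
Proof.
have := @T_block 1 0 K; rewrite addn0 mul1n T0 addn0 => ->.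
  have -> : 1 = 0 * b + 1 by [].
  by rewrite T_step // exp1n T0.
by rewrite expn_gt0 (leq_trans _ hb).
Qed.

End Aux.

Lemma happy_T e b n : 0 < n -> happy e b (T e b n) -> happy e b n.
Proof. by move=> n0 [_ [r hr]]; split=> //; exists r.+1; rewrite iterSr. Qed.

Lemma split_aux (x Y Z : nat) : x < Z -> 0 < Y -> Y * Z - x = (Y - 1) * Z + (Z - x).
Proof.
move=> hZ hY; have hYZ : Z <= Y * Z by rewrite leq_pmull.
rewrite mulnBl mul1n; lia.
Qed.

Lemma int_aux (N : int) (l : nat) : (absz N < l)%N -> (N < l%:Z)%R.
Proof. move=> h; lia. Qed.

Lemma nat_aux (a x s Y : nat) : a + x <= s -> x + s < Y -> a < Y - x.
Proof. move=> h1 h2; lia. Qed.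

Theorem lemma2p3 (e b : nat) :
  1 <= e -> 2 <= b -> ~~ odd b ->
  (forall a : int, exists h : nat,
      happy e b h /\ (h%:Z = a %[mod ((b - 1) ^ e)%:Z])%Z) ->
  forall (x : nat) (N : int), 0 < x ->
    exists l : nat, (N < l%:Z)%R /\ happy e b l /\ happy e b (l + x).
Proof.
move=> he hb _ hyp x N hx.
have bp : 0 < b by apply: leq_trans hb.
set M := (b - 1) ^ e.
have Mpos : 0 < M by rewrite expn_gt0 subn_gt0 hb.
have hxK : x < b ^ x by apply: ltn_expl.
set c0 := T e b (b ^ x - x).
set B := absz N + x.
have [h [[hpos [r hr]] hmod]] := hyp (Posz c0).
have hmodn : h %% M = c0 %% M.
  by move: hmod; rewrite !modz_nat => -[].
set k := totient M.
have kpos : 0 < k by rewrite totient_gt0.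
have cop : coprime b M.
  rewrite coprimeXr //; have := coprimeSn (b - 1).
  by rewrite subn1 prednK.
have eul : b ^ k = 1 %[mod M] := Euler_exp_totient cop.
set t := c0 + M * B + 1.
set H := h * b ^ (k * t).
have Hmod : H %% M = c0 %% M.
  by rewrite /H expnM -modnMmr -modnXm eul modnXm exp1n modnMmr muln1 hmodn.
have Hbig : c0 + M * B < H.
  have h1 : k * t < b ^ (k * t) by apply: ltn_expl.
  have h2 : t <= k * t by rewrite leq_pmull.
  have h3 : b ^ (k * t) <= H by rewrite /H leq_pmull.
  have h4 : c0 + M * B < t by rewrite /t addn1.
  exact: (leq_trans h4 (leq_trans h2 (ltnW (leq_trans h1 h3)))).
set s := (H - c0) %/ M.
have Hs : H = c0 + s * M.
  rewrite /s divnK; first by rewrite subnKC // ltnW // (leq_ltn_trans _ Hbig) // leq_addr.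
  by rewrite -eqn_mod_dvd ?Hmod // ltnW // (leq_ltn_trans _ Hbig) // leq_addr.
have sB : B <= s.
  move: Hbig; rewrite Hs ltn_add2l mulnC ltn_pmul2r //; exact: ltnW.
have hxs : x + s < b ^ (x + s) by apply: ltn_expl.
exists (b ^ (x + s) - x).
have lsplit : b ^ (x + s) - x = (b ^ s - 1) * b ^ x + (b ^ x - x).
  have : 0 < b ^ s by rewrite expn_gt0 bp.
  move=> hY; rewrite expnD mulnC; exact: split_aux.
have Tl : T e b (b ^ (x + s) - x) = H.
  rewrite lsplit T_block //; last by rewrite ltn_subrL hx expn_gt0 bp.
  by rewrite T_nines // Hs addnC mulnC.
have T1 : T e b 1 = 1.
  have -> : 1 = 0 * b + 1 by [].
  by rewrite T_step // exp1n T_eq.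
have happy1 : happy e b 1 by split=> //; exists 0.
split.
  apply: int_aux; rewrite /B in sB; exact: (nat_aux _ _ _ _ sB hxs).
split.
  apply: happy_T; first by rewrite subn_gt0 (leq_ltn_trans (leq_addr s x) hxs).
  rewrite Tl; split; first by rewrite /H muln_gt0 hpos expn_gt0 bp.
  exists r.+1; rewrite iterSr /H.
  have -> : h * b ^ (k * t) = h * b ^ (k * t) + 0 by rewrite addn0.
  by rewrite T_block ?expn_gt0 ?bp // T0 // addn0 -iterSr iterS hr T1.
rewrite subnK; last by rewrite ltnW // (leq_ltn_trans _ hxs) // leq_addr.
apply: happy_T; first by rewrite expn_gt0 bp.
by rewrite T_pow.
Qed.
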